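(* Let $(J,{\sf hn})$ be a hyperbolic Banach space where $J$ is a cone with joins, and let $\tau$ be the chronological topology induced by ${\sf hn}$. Then the intersection of any countable family of $\tau$-open and $\tau$-dense subsets of $J$ is $\tau$-dense.
   Context: A prewedge is a set $W$ with a commutative associative addition with neutral element $0$ and a multiplication $[0,\infty)\times W\to W$ such that $\lambda(\eta v)=(\lambda\eta)v$, $0v=0$, $1v=v$, $(\lambda+\eta)v=\lambda v+\eta v$, $\lambda(v+w)=\lambda v+\lambda w$; it carries the preorder $v\le w$ iff $v+z=w$ for some $z$. A wedge is a prewedge in which $\le$ is antisymmetric and $v=\sup_{\eta<1}\eta v$ for every $v$. A cone is a wedge in which every directed subset (one in which every finite subset, including the empty one, has an upper bound in it) has a supremum. A cone with joins is a cone $J$ in which every subset $A$ has an infimum and $\inf(v+A)=v+\inf A$ for all $v\in J$, $A\subset J$. A hyperbolic norm on $J$ is a map ${\sf hn}:J\to[0,\infty]$ with ${\sf hn}(0)=0$ and ${\sf hn}(\lambda_1v_1+\lambda_2v_2)\ge\lambda_1{\sf hn}(v_1)+\lambda_2{\sf hn}(v_2)$ for all $\lambda_i\ge0$; a hyperbolic Banach space is a cone with a hyperbolic norm. Write $v\ll w$ if there is $z$ with ${\sf hn}(z)>0$ and $v+z=w$. The chronological topology is the topology generated by the sets $I^+(v):=\{w:v\ll w\}$ and $I^-(v):=\{w:w\ll v\}$, $v\in J$. *)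

(* Defs.v *)
From Stdlib Require Import Reals List.
From Coquelicot Require Import Rbar.
Open Scope R_scope.
Set Implicit Arguments.

Section Cones.
Variable J : Type.
Variable add : J -> J -> J.
Variable zero : J.
Variable smul : R -> J -> J.  (* only used with nonnegative scalars *)

Definition prewedge : Prop :=
  (forall u v, add u v = add v u) /\
  (forall u v w, add u (add v w) = add (add u v) w) /\
  (forall v, add zero v = v) /\
  (forall l e v, 0 <= l -> 0 <= e -> smul l (smul e v) = smul (l * e) v) /\
  (forall v, smul 0 v = zero) /\
  (forall v, smul 1 v = v) /\
  (forall l e v, 0 <= l -> 0 <= e -> smul (l + e) v = add (smul l v) (smul e v)) /\
  (forall l v w, 0 <= l -> smul l (add v w) = add (smul l v) (smul l w)).

Definition jle (v w : J) : Prop := exists z, add v z = w.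

Definition is_ub (A : J -> Prop) (u : J) : Prop := forall a, A a -> jle a u.
Definition is_lb (A : J -> Prop) (l : J) : Prop := forall a, A a -> jle l a.
Definition is_sup (A : J -> Prop) (s : J) : Prop :=
  is_ub A s /\ forall u, is_ub A u -> jle s u.
Definition is_inf (A : J -> Prop) (i : J) : Prop :=
  is_lb A i /\ forall l, is_lb A l -> jle l i.

Definition wedge : Prop :=
  prewedge /\
  (forall v w, jle v w -> jle w v -> v = w) /\
  (forall v, is_sup (fun w => exists e, 0 <= e /\ e < 1 /\ w = smul e v) v).

(* every finite subset (given as a list, possibly empty) has an upper bound in A *)
Definition directed (A : J -> Prop) : Prop :=
  forall l : list J, (forall x, In x l -> A x) ->
    exists u, A u /\ forall x, In x l -> jle x u.

Definition cone : Prop :=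
  wedge /\ forall A, directed A -> exists s, is_sup A s.

Definition cone_with_joins : Prop :=
  cone /\
  (forall A : J -> Prop, exists i, is_inf A i) /\
  (forall (v : J) (A : J -> Prop) (i : J), is_inf A i ->
     is_inf (fun w => exists a, A a /\ w = add v a) (add v i)).

(* hyperbolic norm with values in [0,oo]; Rbar_mult uses the convention 0 * oo = 0 *)
Definition hyperbolic_norm (hn : J -> Rbar) : Prop :=
  (forall v, Rbar_le (Finite 0) (hn v)) /\
  hn zero = Finite 0 /\
  (forall l1 l2 v1 v2, 0 <= l1 -> 0 <= l2 ->
     Rbar_le (Rbar_plus (Rbar_mult (Finite l1) (hn v1)) (Rbar_mult (Finite l2) (hn v2)))
             (hn (add (smul l1 v1) (smul l2 v2)))).

Definition chrono (hn : J -> Rbar) (v w : J) : Prop :=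
  exists z, Rbar_lt (Finite 0) (hn z) /\ add v z = w.

End Cones.

Inductive gen_open (T : Type) (S : (T -> Prop) -> Prop) : (T -> Prop) -> Prop :=
| go_sub U : S U -> gen_open S U
| go_full : gen_open S (fun _ => True)
| go_inter U V : gen_open S U -> gen_open S V -> gen_open S (fun x => U x /\ V x)
| go_union (F : (T -> Prop) -> Prop) :
    (forall U, F U -> gen_open S U) -> gen_open S (fun x => exists U, F U /\ U x)
| go_ext U V : gen_open S U -> (forall x, U x <-> V x) -> gen_open S V.

Definition chrono_subbase (J : Type) (add : J -> J -> J) (hn : J -> Rbar)
  (U : J -> Prop) : Prop :=
  exists v, (forall w, U w <-> chrono add hn v w) \/ (forall w, U w <-> chrono add hn w v).

Definition chrono_open (J : Type) (add : J -> J -> J) (hn : J -> Rbar) :=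
  gen_open (chrono_subbase add hn).

Definition dense_in (T : Type) (opn : (T -> Prop) -> Prop) (A : T -> Prop) : Prop :=
  forall U, opn U -> (exists x, U x) -> exists x, U x /\ A x.

(* Main.v *)
Require Import Defs.
From Stdlib Require Import Reals List Lra Classical ClassicalEpsilon.
From Coquelicot Require Import Rbar.
Open Scope R_scope.

Ltac rbsolve := unfold Rbar_mult, Rbar_mult', Rbar_plus, Rbar_plus' in *; simpl in *;
  repeat match goal with
  | H : context [Rle_dec ?a ?b] |- _ => destruct (Rle_dec a b); simpl in *
  | H : context [Rle_lt_or_eq_dec ?a ?b ?p] |- _ => destruct (Rle_lt_or_eq_dec a b p); simpl in *
  end; try lra; auto.
Lemma rb1 a c : Rbar_lt (Finite 0) a -> Rbar_le (Rbar_plus (Rbar_mult (Finite (/2)) a) (Rbar_mult (Finite 0) (Finite 0))) c -> Rbar_lt (Finite 0) c.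
Proof. destruct a as [a| |], c as [c| |]; intros H1 H2; rbsolve. Qed.
Lemma rb2 a b c : Rbar_lt (Finite 0) a -> Rbar_le (Finite 0) b -> Rbar_le (Rbar_plus (Rbar_mult (Finite 1) a) (Rbar_mult (Finite 1) b)) c -> Rbar_lt (Finite 0) c.
Proof. destruct a as [a| |], b as [b| |], c as [c| |]; intros H1 H0 H2; rbsolve. Qed.

Section S.
Context (J : Type) (add : J -> J -> J) (zero : J) (smul : R -> J -> J) (hn : J -> Rbar)
  (Hpw : prewedge add zero smul) (Hhn : hyperbolic_norm add zero smul hn)
  (Hinf : forall A : J -> Prop, exists i, is_inf add A i).

Lemma jle_refl v : jle add v v.
Proof. destruct Hpw as (Hc & Ha & H0 & _). exists zero. rewrite Hc; apply H0. Qed.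

Lemma jle_trans u v w : jle add u v -> jle add v w -> jle add u w.
Proof. destruct Hpw as (Hc & Ha & H0 & _). intros [z1 <-] [z2 <-].
  exists (add z1 z2). now rewrite Ha. Qed.

Lemma hn_add_pos z y : Rbar_lt (Finite 0) (hn z) -> Rbar_lt (Finite 0) (hn (add z y)).
Proof.
  destruct Hpw as (Hc & Ha & H0 & Hsm & Hs0 & Hs1 & _).
  destruct Hhn as (Hge & Hz & Hsup). intros Hp.
  pose proof (Hsup 1 1 z y ltac:(lra) ltac:(lra)) as H. rewrite !Hs1 in H.
  exact (rb2 _ _ _ Hp (Hge y) H).
Qed.

Lemma chrono_jle a b : chrono add hn a b -> jle add a b.
Proof. intros [z [_ H]]. now exists z. Qed.

Lemma chrono_jle_trans a b c : chrono add hn a b -> jle add b c -> chrono add hn a c.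
Proof. destruct Hpw as (Hc & Ha & _). intros [z [Hz <-]] [y <-].
  exists (add z y). split. now apply hn_add_pos. now rewrite Ha. Qed.

Lemma jle_chrono_trans a b c : jle add a b -> chrono add hn b c -> chrono add hn a c.
Proof. destruct Hpw as (Hc & Ha & _). intros [y <-] [z [Hz <-]].
  exists (add y z). split. rewrite Hc. now apply hn_add_pos. now rewrite Ha. Qed.

Lemma chrono_interp a c : chrono add hn a c -> exists b, chrono add hn a b /\ chrono add hn b c.
Proof.
  destruct Hpw as (Hc & Ha & H0 & Hsm & Hs0 & Hs1 & Hsd & _).
  destruct Hhn as (Hge & Hz & Hsup). intros [z [Hpos <-]].
  set (h := smul (/2) z).
  assert (Hh : Rbar_lt (Finite 0) (hn h)).
  { pose proof (Hsup (/2) 0 z zero ltac:(lra) ltac:(lra)) as H.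
    rewrite Hs0, (Hc _ zero), H0, Hz in H. exact (rb1 _ _ Hpos H). }
  exists (add a h). split.
  - exists h. split; auto.
  - exists h. split; auto. rewrite <- Ha. f_equal. unfold h.
    rewrite <- Hsd by lra. replace (/2 + /2) with 1 by lra. apply Hs1.
Qed.

Lemma sup_exists (S : J -> Prop) : exists s, is_ub add S s /\ forall u, is_ub add S u -> jle add s u.
Proof.
  destruct (Hinf (is_ub add S)) as [i [Hlb Hgr]]. exists i. split.
  - intros a Ha. apply Hgr. intros u Hu. now apply Hu.
  - intros u Hu. now apply Hlb.
Qed.

Definition Bset (las ubs : list J) (w : J) : Prop :=
  (forall a, In a las -> chrono add hn a w) /\ (forall b, In b ubs -> chrono add hn w b).

Lemma lower_open (las : list J) : chrono_open add hn (fun w => forall a, In a las -> chrono add hn a w).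
Proof.
  induction las as [|a l IH].
  - eapply go_ext. apply go_full. simpl; intuition.
  - eapply go_ext. apply go_inter. apply go_sub with (U := fun w => chrono add hn a w). exists a. left. intros w; reflexivity.
    exact IH. simpl. intros x; split.
    + intros [H1 H2] b [<-|Hb]; auto.
    + intros H; split; auto.
Qed.

Lemma upper_open (ubs : list J) : chrono_open add hn (fun w => forall b, In b ubs -> chrono add hn w b).
Proof.
  induction ubs as [|a l IH].
  - eapply go_ext. apply go_full. simpl; intuition.
  - eapply go_ext. apply go_inter. apply go_sub with (U := fun w => chrono add hn w a). exists a. right. intros w; reflexivity.
    exact IH. simpl. intros x; split.
    + intros [H1 H2] b [<-|Hb]; auto.
    + intros H; split; auto.
Qed.

Lemma Bset_open las ubs : chrono_open add hn (Bset las ubs).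
Proof. apply go_inter; [apply lower_open | apply upper_open]. Qed.

Lemma open_basic U : chrono_open add hn U -> forall p, U p ->
  exists las ubs, Bset las ubs p /\ forall w, Bset las ubs w -> U w.
Proof.
  induction 1 as [U HU | | U V _ IHU _ IHV | F _ IH | U V _ IH Hext]; intros p Hp.
  - destruct HU as [v [Hv|Hv]].
    + exists (v :: nil), nil. split.
      * split; [intros a [<-|[]]; now apply Hv | intros b []].
      * intros w [H _]. apply Hv. apply H. now left.
    + exists nil, (v :: nil). split.
      * split; [intros a [] | intros b [<-|[]]; now apply Hv].
      * intros w [_ H]. apply Hv. apply H. now left.
  - exists nil, nil. split; [split; intros ? [] | auto].
  - destruct Hp as [HpU HpV].
    destruct (IHU p HpU) as (l1 & u1 & B1 & S1).
    destruct (IHV p HpV) as (l2 & u2 & B2 & S2).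
    exists (l1 ++ l2), (u1 ++ u2). split.
    + destruct B1, B2; split; intros a Ha; apply in_app_or in Ha; destruct Ha; auto.
    + intros w [Hl Hu]. split; [apply S1 | apply S2]; split; intros; 
        (apply Hl || apply Hu); apply in_or_app; auto.
  - destruct Hp as [V [HV Vp]]. destruct (IH V HV p Vp) as (l & u & B & S0).
    exists l, u. split; auto. intros w Hw. exists V; auto.
  - apply Hext in Hp. destruct (IH p Hp) as (l & u & B & S0).
    exists l, u. split; auto. intros w Hw. apply Hext; auto.
Qed.

Lemma lower_interp p (las : list J) : (forall a, In a las -> chrono add hn a p) ->
  exists las', (forall a, In a las -> exists c, In c las' /\ chrono add hn a c) /\
    (forall c, In c las' -> chrono add hn c p).
Proof.
  induction las as [|a l IH]; intros H.
  - exists nil. split; intros ? [].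
  - destruct IH as (l' & H1 & H2). { intros; apply H; now right. }
    destruct (chrono_interp a p (H a (or_introl eq_refl))) as [c [Hac Hcp]].
    exists (c :: l'). split.
    + intros b [<-|Hb]. exists c; split; auto. now left.
      destruct (H1 b Hb) as [d [Hd1 Hd2]]. exists d; split; auto. now right.
    + intros d [<-|Hd]; auto.
Qed.

Lemma upper_interp p (ubs : list J) : (forall b, In b ubs -> chrono add hn p b) ->
  exists ubs', (forall b, In b ubs -> exists d, In d ubs' /\ chrono add hn d b) /\
    (forall d, In d ubs' -> chrono add hn p d).
Proof.
  induction ubs as [|a l IH]; intros H.
  - exists nil. split; intros ? [].
  - destruct IH as (l' & H1 & H2). { intros; apply H; now right. }
    destruct (chrono_interp p a (H a (or_introl eq_refl))) as [c [Hac Hcp]].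
    exists (c :: l'). split.
    + intros b [<-|Hb]. exists c; split; auto. now left.
      destruct (H1 b Hb) as [d [Hd1 Hd2]]. exists d; split; auto. now right.
    + intros d [<-|Hd]; auto.
Qed.

Lemma key U p : chrono_open add hn U -> U p ->
  exists l u O, chrono_open add hn O /\ (exists x, O x) /\
    (forall w, O w -> jle add l w /\ jle add w u) /\
    (forall w, jle add l w -> jle add w u -> U w).
Proof.
  intros HU Hp. destruct (open_basic U HU p Hp) as (las & ubs & [Bl Bu] & HB).
  destruct (lower_interp p las Bl) as (las' & L1 & L2).
  destruct (upper_interp p ubs Bu) as (ubs' & U1 & U2).
  destruct (sup_exists (fun c => In c las')) as [l [Hlub Hlleast]].
  destruct (Hinf (fun d => In d ubs')) as [u [Hulb Hugr]].
  exists l, u, (Bset las' ubs'). split; [apply Bset_open|]. split.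
  - exists p. split; auto.
  - split.
    + intros w [Hw1 Hw2]. split.
      * apply Hlleast. intros c Hc. apply chrono_jle; auto.
      * apply Hugr. intros d Hd. apply chrono_jle; auto.
    + intros w Hlw Hwu. apply HB. split.
      * intros a Ha. destruct (L1 a Ha) as [c [Hc Hac]].
        apply chrono_jle_trans with c; auto.
        apply jle_trans with l; auto.
      * intros b Hb. destruct (U1 b Hb) as [d [Hd Hdb]].
        apply jle_chrono_trans with d; auto.
        apply jle_trans with u; auto.
Qed.

End S.

Record st (J : Type) := mkst { sl : J; su : J; sO : J -> Prop }.
Arguments sl {J}. Arguments su {J}. Arguments sO {J}. Arguments mkst {J}.

Fixpoint iter_st (J : Type) (f : nat -> st J -> st J) (s0 : st J) (n : nat) : st J :=
  match n with 0 => s0 | S k => f k (@iter_st J f s0 k) end.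

Theorem mainTheorem18 (J : Type) (add : J -> J -> J) (zero : J) (smul : R -> J -> J)
  (hn : J -> Rbar)
  (HJ : cone_with_joins add zero smul)
  (Hhn : hyperbolic_norm add zero smul hn)
  (U : nat -> J -> Prop)
  (Hopen : forall n, chrono_open add hn (U n))
  (Hdense : forall n, dense_in (chrono_open add hn) (U n)) :
  dense_in (chrono_open add hn) (fun x => forall n, U n x).
Proof.
  destruct HJ as [[[Hpw _] _] [Hinf _]].
  intros W HW [p Wp].
  pose proof (jle_refl J add zero smul Hpw) as jrefl.
  pose proof (jle_trans J add zero smul Hpw) as jtrans.
  set (P := fun s : st J => chrono_open add hn (sO s) /\ (exists x, sO s x) /\
     (forall w, sO s w -> jle add (sl s) w /\ jle add w (su s))).
  assert (Hstep : forall n (s : st J), exists s', P s -> P s' /\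
    (forall w, jle add (sl s') w -> jle add w (su s') -> sO s w /\ U n w)).
  { intros n s. destruct (classic (P s)) as [Hs|Hs].
    - destruct Hs as (HO & [x Hx] & _).
      destruct (Hdense n (sO s) HO (ex_intro _ x Hx)) as [y [Hy1 Hy2]].
      destruct (key J add zero smul hn Hpw Hhn Hinf (fun w => sO s w /\ U n w) y
        (go_inter HO (Hopen n)) (conj Hy1 Hy2)) as (l & u & O & H1 & H2 & H3 & H4).
      exists (mkst l u O). intros _. split; [split; [|split]|]; auto.
    - exists (mkst zero zero (fun _ => True)). intros C; contradiction. }
  pose (f := fun n s => proj1_sig (constructive_indefinite_description _ (Hstep n s))).
  assert (Hf : forall n s, P s -> P (f n s) /\
    (forall w, jle add (sl (f n s)) w -> jle add w (su (f n s)) -> sO s w /\ U n w)).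
  { intros n s. exact (proj2_sig (constructive_indefinite_description _ (Hstep n s))). }
  destruct (key J add zero smul hn Hpw Hhn Hinf W p HW Wp) as (l0 & u0 & O0 & H1 & H2 & H3 & H4).
  set (s0 := mkst l0 u0 O0).
  assert (HP0 : P s0) by (split; [|split]; auto).
  set (g := @iter_st J f s0).
  assert (HP : forall n, P (g n)).
  { induction n; simpl; auto. apply Hf; auto. }
  assert (HR : forall n w, jle add (sl (g (S n))) w -> jle add w (su (g (S n))) ->
     sO (g n) w /\ U n w).
  { intros n. apply (Hf n (g n) (HP n)). }
  assert (Hlu : forall n, jle add (sl (g n)) (su (g n))).
  { intros n. destruct (HP n) as (_ & [x Hx] & H). destruct (H x Hx).
    eapply jtrans; eauto. }
  assert (Hmon : forall n, jle add (sl (g n)) (sl (g (S n))) /\ jle add (su (g (S n))) (su (g n))).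
  { intros n. destruct (HP n) as (_ & _ & H).
    split.
    - destruct (HR n (sl (g (S n)))) as [HO _].
      apply jrefl. apply Hlu. apply (H _ HO).
    - destruct (HR n (su (g (S n)))) as [HO _].
      apply Hlu. apply jrefl. apply (H _ HO). }
  assert (Hml : forall m n, (m <= n)%nat -> jle add (sl (g m)) (sl (g n))).
  { intros m n Hmn. induction Hmn. apply jrefl.
    eapply jtrans; eauto. apply Hmon. }
  assert (Hmu : forall m n, (m <= n)%nat -> jle add (su (g n)) (su (g m))).
  { intros m n Hmn. induction Hmn. apply jrefl.
    apply jtrans with (su (g m0)); [apply Hmon | exact IHHmn]. }
  assert (Hlu2 : forall m n, jle add (sl (g m)) (su (g n))).
  { intros m n. destruct (Nat.le_ge_cases m n).
    - eapply jtrans; eauto. 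
    - eapply jtrans. apply Hlu. apply Hmu. auto. }
  destruct (sup_exists J add Hinf (fun w => exists m, w = sl (g m))) as [x [Hub Hleast]].
  assert (Hx : forall n, jle add (sl (g n)) x /\ jle add x (su (g n))).
  { intros n. split. apply Hub. eauto. apply Hleast. intros a [m ->]. apply Hlu2. }
  exists x. split.
  - apply H4; apply (Hx 0%nat).
  - intros n. apply (HR n x); apply Hx.
Qed.
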